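(* Let $A$ be a deterministic max-finding algorithm that makes $O(n)$ comparisons on $n$ elements. Then $A$ has error at least $\log_2\log_2 n - O(1)$.
   Context: Model of imprecise comparisons: there are $n$ elements, each with a fixed unknown real value; we identify an element with its value. Asked to compare $x_i$ and $x_j$, the comparator answers either ''$x_i \ge x_j$'' or ''$x_j \ge x_i$''. If $|x_i-x_j|>1$ the answer is correct; if $|x_i-x_j|\le 1$ the answer is arbitrary (possibly adversarial and adaptive). The error of a max-finding algorithm (on inputs of size $n$) is the smallest $k$ such that for every input and every consistent comparator behaviour its output $x$ satisfies $x \ge x^*-k$, where $x^*$ is the maximum value of an input element. *)

(* Defs.v *)
From mathcomp Require Import ssreflect ssrbool ssrnat fintype.
From Stdlib Require Import Reals.

Set Implicit Arguments.
Unset Strict Implicit.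

(* A deterministic comparison-based algorithm on n elements, as a decision
   tree.  [Ask i j t_ge t_le] compares x_i and x_j: the comparator answers
   either "x_i >= x_j" (continue with t_ge) or "x_j >= x_i" (continue with
   t_le).  [Out i] outputs element i. *)
Inductive dtree (n : nat) : Type :=
| Out : 'I_n -> dtree n
| Ask : 'I_n -> 'I_n -> dtree n -> dtree n -> dtree n.

Fixpoint depth (n : nat) (t : dtree n) : nat :=
  match t with
  | Out _ => 0
  | Ask _ _ l r => S (Nat.max (depth l) (depth r))
  end.

(* [reach x t o]: on input values x, some comparator behaviour consistent
   with the imprecise-comparison model (answers are correct whenever
   |x_i - x_j| > 1, arbitrary -- adaptively/adversarially -- otherwise)
   makes the algorithm t output o.  The answer "x_i >= x_j" is permitted
   iff it is not a wrong answer with |x_i - x_j| > 1, i.e. iff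
   x_i >= x_j - 1. *)
Inductive reach (n : nat) (x : 'I_n -> R) : dtree n -> 'I_n -> Prop :=
| reach_out : forall o, reach x (Out o) o
| reach_ge : forall i j l r o, (x j - 1 <= x i)%R -> reach x l o ->
    reach x (Ask i j l r) o
| reach_le : forall i j l r o, (x i - 1 <= x j)%R -> reach x r o ->
    reach x (Ask i j l r) o.

(* k is an admissible error bound for t: for every input and every consistent
   comparator behaviour, the output x satisfies x >= x^* - k, where x^* is the
   maximum (equivalently x >= x_i - k for every element i). *)
Definition error_bound (n : nat) (t : dtree n) (k : R) : Prop :=
  forall (x : 'I_n -> R) (o : 'I_n), reach x t o ->
    forall i : 'I_n, (x i - k <= x o)%R.

(* "error of t is at least e": the smallest admissible k is >= e, i.e. every
   admissible k is >= e. *)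
Definition error_at_least (n : nat) (t : dtree n) (e : R) : Prop :=
  forall k : R, error_bound t k -> (e <= k)%R.

Definition log2 (y : R) : R := (ln y / ln 2)%R.

(* Main.v *)
Require Import Defs.
From mathcomp Require Import ssreflect ssrbool ssrnat fintype.
From Stdlib Require Import Reals.
From mathcomp Require Import ssrfun eqtype seq finset bigop choice div.
From Stdlib Require Import Lra Lia ZArith.
From mathcomp Require Import ssrnat zify.

Set Implicit Arguments.
Unset Strict Implicit.


Definition rec (N : nat) := ('I_N * 'I_N * nat)%type.
Definition winner {N} (r : rec N) := r.1.1.
Definition loser {N} (r : rec N) := r.1.2.
Definition cnt {N} (r : rec N) := r.2.

Definition upd {N} (w : 'I_N -> nat) (a : 'I_N) : 'I_N -> nat :=
  fun v => if v == a then (w v).+1 else w v.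

Fixpoint adv {N} (t : dtree N) (w : 'I_N -> nat) : 'I_N * seq (rec N) :=
  match t with
  | Out o => (o, [::])
  | Ask i j l r =>
    if w i <= w j then let p := adv l (upd w i) in (p.1, (i, j, w i) :: p.2)
    else let p := adv r (upd w j) in (p.1, (j, i, w j) :: p.2)
  end.

Lemma reach_adv N (t : dtree N) (w : 'I_N -> nat) (x : 'I_N -> R) :
  (forall r, r \in (adv t w).2 -> (x (loser r) - 1 <= x (winner r))%R) ->
  reach x t (adv t w).1.
Proof.
elim: t w => [o|i j l IHl r IHr] w /=; first by constructor.
case: ifP => _ /= H.
- apply: reach_ge; first by apply: (H (i, j, w i)); rewrite inE eqxx.
  by apply: IHl => r0 Hr; apply: H; rewrite inE Hr orbT.
- apply: reach_le; first by apply: (H (j, i, w j)); rewrite inE eqxx.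
  by apply: IHr => r0 Hr; apply: H; rewrite inE Hr orbT.
Qed.

Lemma size_adv N (t : dtree N) w : size (adv t w).2 <= depth t.
Proof.
elim: t w => [o|i j l IHl r IHr] w //=.
case: ifP => _ /=; rewrite ltnS.
- apply: leq_trans (IHl _) _; apply/leP; apply: Nat.le_max_l.
- apply: leq_trans (IHr _) _; apply/leP; apply: Nat.le_max_r.
Qed.

Definition fin {N} (w : 'I_N -> nat) (E : seq (rec N)) v :=
  w v + count (fun r => winner r == v) E.

Lemma adv_inv N (t : dtree N) w :
  let E := (adv t w).2 in
  (forall r, r \in E -> cnt r <= fin w E (loser r)) /\
  (forall r, r \in E -> w (winner r) <= cnt r < fin w E (winner r)) /\
  (forall r1 r2, r1 \in E -> r2 \in E -> winner r1 = winner r2 ->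
     cnt r1 = cnt r2 -> loser r1 = loser r2).
Proof.
elim: t w => [o|i j l IHl r IHr] w /=; first by split.
have key : forall (a b : 'I_N) (t' : dtree N), w a <= w b ->
  (let E := (adv t' (upd w a)).2 in
  (forall r, r \in E -> cnt r <= fin (upd w a) E (loser r)) /\
  (forall r, r \in E -> upd w a (winner r) <= cnt r < fin (upd w a) E (winner r)) /\
  (forall r1 r2, r1 \in E -> r2 \in E -> winner r1 = winner r2 ->
     cnt r1 = cnt r2 -> loser r1 = loser r2)) ->
  let E := (a, b, w a) :: (adv t' (upd w a)).2 in
  (forall r, r \in E -> cnt r <= fin w E (loser r)) /\
  (forall r, r \in E -> w (winner r) <= cnt r < fin w E (winner r)) /\
  (forall r1 r2, r1 \in E -> r2 \in E -> winner r1 = winner r2 ->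
     cnt r1 = cnt r2 -> loser r1 = loser r2).
  move=> a b t' hab /= [H1 [H2 H3]].
  set E' := (adv t' (upd w a)).2 in H1 H2 H3 *.
  have finE : forall v, fin w ((a, b, w a) :: E') v = fin (upd w a) E' v.
    move=> v; rewrite /fin /upd /= /winner /=.
    by case: (v =P a) => [->|/eqP nv]; rewrite ?eqxx ?addSnnS ?add0n // eq_sym (negbTE nv).
  have upd_ge : forall v, w v <= upd w a v.
    by move=> v; rewrite /upd; case: (v == a).
  split; [|split].
  - move=> r0; rewrite inE => /orP [/eqP ->|Hr]; rewrite finE.
      rewrite /cnt /loser /=; apply: leq_trans hab _; apply: leq_trans (upd_ge b) _.
      by rewrite /fin leq_addr.
    exact: H1.
  - move=> r0; rewrite inE => /orP [/eqP ->|Hr]; rewrite finE.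
      rewrite /cnt /winner /= leqnn /= /fin /upd eqxx.
      by apply: leq_trans (leq_addr _ _); rewrite ltnSn.
    have /andP [h1 h2] := H2 _ Hr; rewrite h2 andbT.
    exact: leq_trans (upd_ge _) h1.
  - move=> r1 r2; rewrite !inE => /orP [/eqP ->|Hr1] /orP [/eqP ->|Hr2] //.
    + move=> ew ec; exfalso.
      have /andP [h1 _] := H2 _ Hr2.
      move: h1; rewrite -ew -ec /cnt /winner /= /upd eqxx /=.
      by rewrite ltnn.
    + move=> ew ec; exfalso.
      have /andP [h1 _] := H2 _ Hr1.
      move: h1; rewrite ew ec /cnt /winner /= /upd eqxx /=.
      by rewrite ltnn.
    + exact: H3.
case: ifP => hij /=.
- by apply: key; [rewrite hij | apply: IHl].
- apply: key; last by apply: IHr.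
  by rewrite leqNgt; apply/negP => h; move: hij; rewrite (ltnW h).
Qed.

Set Implicit Arguments.
Unset Strict Implicit.


Definition nbr {N} (E : seq (rec N)) (a v : 'I_N) :=
  has (fun r => (winner r == a) && (loser r == v)) E.

Fixpoint ball {N} (o : 'I_N) (E : seq (rec N)) (k : nat) : {set 'I_N} :=
  match k with
  | 0 => [set o]
  | k.+1 => ball o E k :|: [set v | [exists a in ball o E k, nbr E a v]]
  end.

Definition W {N} (E : seq (rec N)) v := count (fun r => winner r == v) E.

Lemma S_sub N (o : 'I_N) E k : ball o E k \subset ball o E k.+1.
Proof. by rewrite /= subsetUl. Qed.

Lemma S_mono N (o : 'I_N) E k k' : k <= k' -> ball o E k \subset ball o E k'.
Proof.
move=> /subnKC <-; elim: (k' - k) => [|d IH]; first by rewrite addn0.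
rewrite addnS; apply: (subset_trans IH); exact: S_sub.
Qed.

Lemma o_in_S N (o : 'I_N) E k : o \in ball o E k.
Proof.
apply: (subsetP (S_mono o E (leq0n k)) o); by rewrite /= inE.
Qed.

Lemma S_close N (o : 'I_N) E k r : r \in E -> winner r \in ball o E k ->
  loser r \in ball o E k.+1.
Proof.
move=> Hr Hw; rewrite /= inE; apply/orP; right; rewrite inE.
apply/existsP; exists (winner r); rewrite Hw /=.
by apply/hasP; exists r => //; rewrite !eqxx.
Qed.

Lemma S_pred N (o : 'I_N) E k v : v \in ball o E k.+1 ->
  v = o \/ exists2 r, r \in E & loser r = v /\ winner r \in ball o E k.
Proof.
elim: k v => [|k IH] v.
  rewrite /= inE => /orP [|]; first by rewrite inE => /eqP; left.
  rewrite inE => /existsP [a /andP [ha /hasP [r Hr /andP [/eqP h1 /eqP h2]]]].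
  by right; exists r => //; rewrite h1 h2.
rewrite [ball o E k.+2]/= inE => /orP [/IH [->|[r Hr [h1 h2]]]|]; first by left.
  by right; exists r => //; split => //; apply: (subsetP (S_sub _ _ _)).
rewrite inE => /existsP [a /andP [ha /hasP [r Hr /andP [/eqP h1 /eqP h2]]]].
by right; exists r => //; rewrite h1 h2.
Qed.

Lemma cardsU_le (T : finType) (A B : {set T}) : #|A :|: B| <= #|A| + #|B|.
Proof. by rewrite -cardsUI leq_addr. Qed.

Lemma S_bound N (o : 'I_N) (E : seq (rec N)) (t k : nat) :
  (forall r, r \in E -> cnt r <= W E (loser r)) ->
  (forall r1 r2, r1 \in E -> r2 \in E -> winner r1 = winner r2 ->
     cnt r1 = cnt r2 -> loser r1 = loser r2) ->
  #|ball o E k.+1| <= 1 + t * #|ball o E k| + #|[set v | t <= W E v]|.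
Proof.
move=> H1 H3.
pose P (p : 'I_N * 'I_t) := fun r : rec N => (winner r == p.1) && (cnt r == val p.2).
pose g (p : 'I_N * 'I_t) := loser (nth (o, o, 0) E (find (P p) E)).
have sub : ball o E k.+1 \subset
   ([set o] :|: [set g p | p in setX (ball o E k) [set: 'I_t]]) :|: [set v | t <= W E v].
  apply/subsetP => v /S_pred [->|[r Hr [hl hw]]].
    by rewrite !inE eqxx.
  case: (leqP t (W E v)) => ht; first by rewrite !inE ht !orbT.
  have hc : cnt r < t by apply: leq_ltn_trans (H1 _ Hr) _; rewrite hl.
  apply/setUP; left; apply/setUP; right.
  apply/imsetP; exists (winner r, Ordinal hc); first by rewrite !inE hw.
  have hP : has (P (winner r, Ordinal hc)) E.
    by apply/hasP; exists r => //; rewrite /P /= !eqxx.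
  have := nth_find (o, o, 0) hP; rewrite /P /= => /andP [/eqP e1 /eqP e2].
  rewrite /g -hl; apply: H3 => //; first by rewrite mem_nth // -has_find.
apply: leq_trans (subset_leq_card sub) _.
apply: leq_trans (cardsU_le _ _) _; rewrite leq_add2r.
apply: leq_trans (cardsU_le _ _) _; rewrite cards1 leq_add2l.
apply: leq_trans (leq_imset_card _ _) _.
by rewrite cardsX cardsT card_ord mulnC.
Qed.

Lemma sumW N (E : seq (rec N)) : \sum_(v : 'I_N) W E v = size E.
Proof.
elim: E => [|r E IH]; first by rewrite big1.
rewrite /W /= big_split /= -/(W E) IH -add1n; congr addn.
rewrite (bigD1 (winner r)) //= eqxx big1 // => v hv.
by rewrite eq_sym (negbTE hv).
Qed.

Lemma heavy_bound N (E : seq (rec N)) t :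
  t * #|[set v | t <= W E v]| <= size E.
Proof.
rewrite -sumW mulnC -sum_nat_const big_mkcond /=.
apply: leq_sum => v _; rewrite inE; case: ifP => //.
Qed.

Unset Implicit Arguments.


Lemma step_nat (s s' m K Nn : nat) (H : nat -> nat) :
  1 <= K -> 1 <= s -> s' <= Nn -> m <= K * Nn ->
  (forall t, s' <= 1 + t * s + H t) -> (forall t, t * H t <= m) ->
  s' ^ 2 <= 36 * K * Nn * s.
Proof.
move=> hK hs hs'N hm hC hD.
rewrite leqNgt; apply/negP => hlt.
have h1 : 36 * K * s < s'.
  have : 36 * K * Nn * s < s' * Nn by apply: leq_trans hlt _; rewrite expnS expn1 leq_mul2l hs'N orbT.
  nia.
set t := s' %/ (3 * s).
have hA : t * (3 * s) <= s' by apply: leq_divM.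
have hB : s' < t.+1 * (3 * s) by apply: ltn_ceil; nia.
have ht : 1 <= t by nia.
have hCt := hC t. have hDt := hD t.
have e1 : 3 * H t + 3 >= 2 * s' by nia.
have e2 : 6 * s * t > s' by nia.
have e3 : 18 * s * (t * H t) <= 18 * s * (K * Nn) by nia.
have e4 : (3 * H t + 3) * (6 * s * t) >= 2 * s' * s' by nia.
have e5 : 18 * s * t <= 6 * s' by nia.
have e6 : 18 * s * (t * H t) + 18 * s * t >= 2 * s' * s' by nia.
have e7 : 36 * K * Nn * s < s' * s' by move: hlt; rewrite expnS expn1.
nia.
Qed.

Lemma iter_nat (s : nat -> nat) (Q : nat) :
  s 0 <= 1 -> (forall k, s k.+1 ^ 2 <= Q * s k) ->
  forall k, s k ^ (2 ^ k) <= Q ^ (2 ^ k).-1.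
Proof.
move=> h0 hS; elim => [|k IH]; first by rewrite expn0 expn1 expn0.
have e : (2 ^ k.+1).-1 = 2 ^ k + (2 ^ k).-1.
  by rewrite expnS mul2n -addnn -subn1 -subn1 addnBA // expn_gt0.
rewrite e expnD expnS expnM.
apply: leq_trans (_ : (Q * s k) ^ (2 ^ k) <= _).
  by rewrite leq_exp2r ?expn_gt0.
by rewrite expnMn leq_mul2l IH orbT.
Qed.

Lemma final_nat (Nn a e : nat) : 1 <= Nn -> 0 < e ->
  Nn ^ e <= (a * Nn) ^ e.-1 -> Nn <= a ^ e.-1.
Proof.
move=> hN he h.
have e1 : Nn ^ e = Nn * Nn ^ e.-1 by rewrite -expnS prednK.
move: h; rewrite e1 expnMn leq_pmul2r //.
by rewrite expn_gt0 hN.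
Qed.

Set Implicit Arguments.
Unset Strict Implicit.


Fixpoint gx {N} (o : 'I_N) (E : seq (rec N)) (l : nat) (v : 'I_N) : nat :=
  match l with
  | 0 => nat_of_bool (v \notin ball o E 0)
  | l.+1 => gx o E l v + nat_of_bool (v \notin ball o E l.+1)
  end.

Lemma gx_le N (o : 'I_N) E l v : gx o E l v <= l.+1.
Proof. elim: l => [|l IH] /=; [by case: (_ \notin _) | by case: (_ \notin _); lia]. Qed.

Lemma gx_out N (o : 'I_N) E l v : v \notin ball o E l -> gx o E l v = l.+1.
Proof.
elim: l => [|l IH] /=; first by move=> ->.
move=> hv; rewrite hv IH ?addn1 //.
apply/negP => h; move/negP: hv; apply.
by apply: (subsetP (S_sub o E l)).
Qed.

Lemma gx_o N (o : 'I_N) E l : gx o E l o = 0.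
Proof.
elim: l => [|l IH]; first by rewrite /= inE eqxx.
change (gx o E l o + ~~ (o \in ball o E l.+1) = 0).
by rewrite IH (o_in_S o E l.+1).
Qed.

Lemma gx_edge N (o : 'I_N) E l r : r \in E ->
  gx o E l (loser r) <= (gx o E l (winner r)).+1.
Proof.
move=> hr; elim: l => [|l IH] /=; first by case: (_ \notin _).
case hb: (loser r \notin ball o E l.+1); last by rewrite addn0; lia.
have hw : winner r \notin ball o E l.
  by apply/negP => h; move/negP: hb; apply; apply: S_close.
rewrite (gx_out hw).
have := gx_le o E l.+1 (loser r) => /=; rewrite hb.
case: (winner r \notin ball o E l.+1); lia.
Qed.

Set Implicit Arguments.
Unset Strict Implicit.


Lemma ball_full N (t : dtree N) (K : nat) k :
  1 <= K -> depth t <= K * N ->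
  let o := (adv t (fun _ => 0)).1 in let E := (adv t (fun _ => 0)).2 in
  #|ball o E k| = N -> N <= (36 * K) ^ (2 ^ k).-1.
Proof.
move=> hK hd o E hfull.
have [H1 [_ H3]] := adv_inv t (fun _ => 0).
have H1' : forall r, r \in E -> cnt r <= W E (loser r).
  by move=> r hr; have := H1 r hr; rewrite /fin add0n.
have hN : 1 <= N by rewrite -hfull card_gt0; apply/set0Pn; exists o; apply: o_in_S.
have hs : forall k, #|ball o E k.+1| ^ 2 <= 36 * K * N * #|ball o E k|.
  move=> j; apply: (@step_nat _ _ (size E) _ _ (fun t => #|[set v | t <= W E v]|)) => //.
  - by rewrite card_gt0; apply/set0Pn; exists o; apply: o_in_S.
  - by apply: leq_trans (max_card _) _; rewrite card_ord.
  - exact: leq_trans (size_adv _ _) hd.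
  - by move=> t0; apply: S_bound.
  - by move=> t0; apply: heavy_bound.
have h0 : #|ball o E 0| <= 1 by rewrite /= cards1.
have := @iter_nat (fun j => #|ball o E j|) (36 * K * N) h0 hs k.
rewrite /= hfull => h.
apply: final_nat hN _ h; exact: expn_gt0.
Qed.

Unset Implicit Arguments.


Lemma INR_unb (c : R) : exists K : nat, (c < INR K)%R.
Proof.
destruct (archimed c) as [h1 h2].
destruct (Z_lt_le_dec (up c) 0) as [hz|hz].
- exists 0%nat; apply IZR_lt in hz; simpl; lra.
- exists (Z.to_nat (up c)); rewrite INR_IZR_INZ Z2Nat.id //.
Qed.

Lemma INR_exp2 k : INR (2 ^ k) = (2 ^ k)%R.
Proof.
elim: k => [|k IH]; first by rewrite expn0 /=.
by rewrite expnS mult_INR IH /=.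
Qed.

Lemma log_bound (Nn a k : nat) : (2 <= Nn)%N -> (2 <= a)%N ->
  (INR Nn < INR a ^ (2 ^ k))%R ->
  (log2 (log2 (INR Nn)) < INR k + log2 (log2 (INR a)))%R.
Proof.
move=> hN ha h.
have l2 : (0 < ln 2)%R by have := ln_lt_2; lra.
have hN' : (2 <= INR Nn)%R by apply: (le_INR 2); apply/leP.
have ha' : (2 <= INR a)%R by apply: (le_INR 2); apply/leP.
have lN : (0 < ln (INR Nn))%R by rewrite -ln_1; apply: ln_increasing; lra.
have la : (0 < ln (INR a))%R by rewrite -ln_1; apply: ln_increasing; lra.
have h2 : (ln (INR Nn) < INR (2 ^ k) * ln (INR a))%R.
  rewrite -ln_pow; last lra.
  apply: ln_increasing; [lra | exact: h].
rewrite INR_exp2 in h2.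
have p2 : (0 < 2 ^ k)%R by apply: pow_lt; lra.
have LN : (0 < log2 (INR Nn))%R by rewrite /log2; apply: Rdiv_lt_0_compat.
have LA : (0 < log2 (INR a))%R by rewrite /log2; apply: Rdiv_lt_0_compat.
have h3 : (log2 (INR Nn) < 2 ^ k * log2 (INR a))%R.
  rewrite /log2 /Rdiv -Rmult_assoc; apply: Rmult_lt_compat_r => //.
  by apply: Rinv_0_lt_compat.
have h4 : (ln (log2 (INR Nn)) < INR k * ln 2 + ln (log2 (INR a)))%R.
  rewrite -ln_pow; last lra.
  rewrite -ln_mult; [|by apply: pow_lt; lra|by []].
  by apply: ln_increasing.
have -> : (INR k + log2 (log2 (INR a)) =
  (INR k * ln 2 + ln (log2 (INR a))) / ln 2)%R.
  rewrite /log2; field; lra.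
rewrite {1}/log2.
apply: Rmult_lt_compat_r => //; by apply: Rinv_0_lt_compat.
Qed.

Lemma INR_expn a e : INR (a ^ e) = (INR a ^ e)%R.
Proof.
elim: e => [|e IH]; first by rewrite expn0 /=.
by rewrite expnS mult_INR IH /=.
Qed.

Unset Implicit Arguments.


Lemma err_nonneg N (t : dtree N) kr : error_bound t kr -> (0 <= kr)%R.
Proof.
move=> Hb.
have hr := @reach_adv N t (fun _ => 0%nat) (fun _ => 0%R) (fun r _ => ltac:(lra)).
have := Hb _ _ hr (adv t (fun _ => 0%nat)).1; lra.
Qed.

Lemma err_lower N (t : dtree N) k kr :
  let o := (adv t (fun _ => 0%nat)).1 in let E := (adv t (fun _ => 0%nat)).2 in
  #|ball o E k| < N -> error_bound t kr -> (INR k.+1 <= kr)%R.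
Proof.
move=> o E hc Hb.
have [m hm] : exists m, m \notin ball o E k.
  case: (pickP (fun m => m \notin ball o E k)) => [m hm|h]; first by exists m.
  exfalso; move: hc; rewrite ltnNge => /negP; apply.
  rewrite -{1}(card_ord N) -cardsT; apply: subset_leq_card.
  by apply/subsetP => v _; have := h v; rewrite /= => /negbFE.
pose x := fun v => INR (gx o E k v).
have hr : reach x t o.
  apply: reach_adv => r hr; rewrite /x.
  have := gx_edge o k hr => /leP /le_INR; rewrite S_INR -/E; lra.
have := Hb x o hr m; rewrite /x gx_o (gx_out hm) /=; lra.
Qed.

Theorem mainTheorem18 (A : forall n : nat, dtree n.+1) (c : R) (n0 : nat) :
  (forall n : nat, (n0 <= n)%N -> (INR (depth (A n)) <= c * INR n.+1)%R) ->
  exists (C : R) (N : nat), forall n : nat, (N <= n)%N ->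
    error_at_least (A n) (log2 (log2 (INR n.+1)) - C)%R.
Proof.
move=> Hd.
have [K0 HK0] := INR_unb c.
set K := K0.+1.
have HK : (c <= INR K)%R by rewrite /K S_INR; lra.
exists (log2 (log2 (INR (36 * K)))), (maxn n0 1) => n hn kr Hb.
have hn0 : (n0 <= n)%N by apply: leq_trans hn; apply: leq_maxl.
have hn1 : (1 <= n)%N by apply: leq_trans hn; apply: leq_maxr.
have hdep : (depth (A n) <= K * n.+1)%N.
  apply/leP; apply: INR_le; rewrite mult_INR.
  apply: Rle_trans (Hd n hn0) _; apply: Rmult_le_compat_r => //; apply: pos_INR.
set o := (adv (A n) (fun _ => 0%nat)).1.
set E := (adv (A n) (fun _ => 0%nat)).2.
have key : forall k : nat, (INR k < log2 (log2 (INR n.+1)) - log2 (log2 (INR (36 * K))))%R ->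
   (INR k + 1 <= kr)%R.
  move=> k hk.
  case: (ltnP #|ball o E k| n.+1) => hc.
    by rewrite -S_INR; apply: err_lower hc Hb.
  have hfull : #|ball o E k| = n.+1.
    apply/eqP; rewrite eqn_leq hc andbT.
    by apply: leq_trans (max_card _) _; rewrite card_ord.
  have hb := ball_full (k := k) (ltn0Sn K0) hdep hfull.
  have hlt : (n.+1 < (36 * K) ^ (2 ^ k))%N.
    apply: leq_ltn_trans hb _.
    rewrite ltn_exp2l; last by rewrite /K; lia.
    by rewrite prednK ?ltnSn // expn_gt0.
  have hlt' : (INR n.+1 < INR (36 * K) ^ (2 ^ k))%R.
    by rewrite -INR_expn; apply: lt_INR; apply/ltP.
  have h2n : (2 <= n.+1)%N by rewrite ltnS.
  have h2K : (2 <= 36 * K)%N by rewrite /K; lia.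
  have := log_bound n.+1 (36 * K) k h2n h2K hlt'.
  lra.
apply: Rnot_lt_le => hlt.
have all : forall k : nat, (INR k <= kr)%R.
  elim => [|k IH]; first exact: err_nonneg Hb.
  rewrite S_INR; apply: key; lra.
have [K1 HK1] := INR_unb kr; have := all K1; lra.
Qed.
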